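(* Let $\mathcal N$ be the one-layer ReLU CNN with input dimension $1\times 3\times 1$, $d_1\ge 1$ filters of dimension $1\times 2\times 1$ and stride $1$ (so the hidden layer has dimension $1\times 2\times d_1$). Then the maximal number of linear regions of $\mathcal N$ is $R_{\mathcal N}=d_1^3+d_1^2+d_1+1$.
   Context: One-layer ReLU CNN with input $X^0\in\mathbb R^{1\times 3\times 1}$, i.e. $x=(x_1,x_2,x_3)\in\mathbb R^3$, and filters $(w_{k,1},w_{k,2})$ with biases $b_k$, $1\le k\le d_1$; the neurons are the $2d_1$ pre-activations $w_{k,1}x_1+w_{k,2}x_2+b_k$ and $w_{k,1}x_2+w_{k,2}x_3+b_k$. An activation pattern assigns $\pm1$ to each neuron; its region is the set of inputs where every pre-activation times its sign is positive. $R_{\mathcal N}$ is the maximum over all parameter values of the number of activation patterns with nonempty region. *)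

(* Defs.v *)
From Stdlib Require Import Reals.
From HB Require Import structures.
From mathcomp Require Import all_boot all_order all_algebra.
From mathcomp Require Import boolp Rstruct.
Set Implicit Arguments. Unset Strict Implicit. Unset Printing Implicit Defensive.
Import Order.TTheory GRing.Theory Num.Theory.
Local Open Scope ring_scope.

(* Neuron (k, j), j in {0,1}: pre-activation w_{k,1} x_{j+1} + w_{k,2} x_{j+2} + b_k
   (0-based: w k 0 * x j + w k 1 * x (j+1) + b k). *)
Definition preact (d1 : nat) (w : 'I_d1 -> 'I_2 -> R) (b : 'I_d1 -> R)
  (x : 'I_3 -> R) (n : 'I_d1 * 'I_2) : R :=
  let k := n.1 in let j := (n.2 : nat) in
  w k ord0 * x (inord j) + w k ord_max * x (inord j.+1) + b k.

Definition sgnb (s : bool) : R := if s then 1 else -1.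

Definition region_nonempty (d1 : nat) (w : 'I_d1 -> 'I_2 -> R) (b : 'I_d1 -> R)
  (s : {ffun 'I_d1 * 'I_2 -> bool}) : Prop :=
  exists x : 'I_3 -> R, forall n, 0 < sgnb (s n) * preact w b x n.

Definition num_regions (d1 : nat) (w : 'I_d1 -> 'I_2 -> R) (b : 'I_d1 -> R) : nat :=
  #|[set s : {ffun 'I_d1 * 'I_2 -> bool} | `[< region_nonempty w b s >] ]|.

(* Main.v *)
Require Import Defs.
From Stdlib Require Import Reals.
From HB Require Import structures.
From mathcomp Require Import all_boot all_order all_algebra.
From mathcomp Require Import boolp Rstruct.
From mathcomp Require Import ring lra zify.
From Stdlib Require Import Classical.
Set Implicit Arguments. Unset Strict Implicit. Unset Printing Implicit Defensive.
Import Order.TTheory GRing.Theory Num.Theory.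
Local Open Scope ring_scope.

Section Gen.
Variable d : nat.
Variable w : 'I_d -> 'I_2 -> R.
Variable b : 'I_d -> R.
Local Notation I := ('I_d * 'I_2)%type.
Local Notation pt := ('I_3 -> R).
Local Notation f n x := (preact w b x n).

Definition CZ (Z : {set I}) (x : pt) : Prop := forall m, m \in Z -> f m x = 0.
Definition good (Z P : {set I}) (s : {ffun I -> bool}) : Prop :=
  exists x, CZ Z x /\ forall m, m \in P -> 0 < sgnb (s m) * f m x.
Definition regs (Z P : {set I}) : {set {ffun I -> bool}} :=
  [set s : {ffun I -> bool} | [forall n, (n \notin P) ==> s n] && `[< good Z P s >]].
Definition cnt (Z P : {set I}) := #|regs Z P|.
Definition cst (n : I) (Z : {set I}) := forall x y, CZ Z x -> CZ Z y -> f n x = f n y.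
Definition ncst (n : I) (Z : {set I}) := exists x y, CZ Z x /\ CZ Z y /\ f n x <> f n y.

Lemma regsP (Z P : {set I}) (s : {ffun I -> bool}) : reflect ((forall n, n \notin P -> s n) /\ good Z P s) (s \in regs Z P).
Proof.
rewrite inE; apply: (iffP andP) => [[/forallP H /asboolP G]|[H G]]; split => //.
- by move=> n; move/implyP: (H n).
- by apply/forallP => n; apply/implyP; apply: H.
- by apply/asboolP.
Qed.

Lemma preactE (x : pt) n :
  f n x = w n.1 ord0 * x (inord n.2) + w n.1 ord_max * x (inord n.2.+1) + b n.1.
Proof. reflexivity. Qed.
Lemma sgnbE s : sgnb s = if s then 1 else -1.
Proof. by case: s. Qed.

Definition Lf (n : I) (v : pt) := f n v - b n.1.

Lemma preact_aff n (x p u v r : pt) s t o :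
  (forall i, x i = p i + s * u i + t * v i + o * r i) ->
  f n x = f n p + s * Lf n u + t * Lf n v + o * Lf n r.
Proof. move=> H; rewrite /Lf !preactE !H; ring. Qed.

Lemma preact_line n (x u : pt) t :
  f n (fun i => x i + t * u i) = f n x + t * Lf n u.
Proof. by rewrite /Lf !preactE; ring. Qed.

Lemma Lf_sub n (x y : pt) : Lf n (fun i => y i - x i) = f n y - f n x.
Proof. by rewrite /Lf !preactE; ring. Qed.

Lemma CZU1 (n : I) (Z : {set I}) (x : pt) : CZ (n |: Z) x <-> f n x = 0 /\ CZ Z x.
Proof.
split => [H|[H1 H2] m]; last by rewrite in_setU1 => /orP[/eqP->|/H2].
by split => [|m mZ]; apply: H; rewrite in_setU1 ?eqxx ?mZ ?orbT.
Qed.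

Lemma sgnb_true x : sgnb true * x = x. Proof. by rewrite sgnbE mul1r. Qed.
Lemma sgnb_false x : sgnb false * x = - x. Proof. by rewrite sgnbE mulN1r. Qed.

Definition setn (s : {ffun I -> bool}) n v : {ffun I -> bool} :=
  [ffun m => if m == n then v else s m].

Lemma cnt_eq0 (Z P : {set I}) : (forall s, ~ (s \in regs Z P)) -> cnt Z P = 0%N.
Proof.
move=> H; apply/eqP; rewrite cards_eq0; apply/eqP/setP => s; rewrite in_set0.
by apply/negP; apply: H.
Qed.

Lemma small (s : seq I) (u L : I -> R) : (forall m, m \in s -> 0 < u m) ->
  exists e, 0 < e /\ forall m, m \in s -> e * L m < u m /\ - (e * L m) < u m.
Proof.
elim: s => [|m s IH] H; first by exists 1; split => //.
have [e [e0 He]] : exists e, 0 < e /\ forall m, m \in s -> e * L m < u m /\ - (e * L m) < u m.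
  by apply: IH => m' ms; apply: H; rewrite inE ms orbT.
have um : 0 < u m by apply: H; rewrite inE eqxx.
have q0 : 0 < 1 + L m ^+ 2 by have := sqr_ge0 (L m); lra.
pose em := u m / (1 + L m ^+ 2).
have em0 : 0 < em by apply: divr_gt0.
have Hm : em * L m < u m /\ - (em * L m) < u m.
  have p1 : 0 < 1 + L m ^+ 2 - L m by rewrite expr2; nra.
  have p2 : 0 < 1 + L m ^+ 2 + L m by rewrite expr2; nra.
  rewrite /em; split; [rewrite mulrAC | rewrite -mulrN mulrAC]; rewrite ltr_pdivrMr //;
  rewrite -subr_gt0 -mulrBr; apply: mulr_gt0 => //; rewrite ?opprK; lra.
have shrink : forall dd ee (x y : R), 0 < dd -> dd <= ee -> ee * x < y -> - (ee * x) < y ->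
    dd * x < y /\ - (dd * x) < y.
  by move=> dd ee x y *; split; nra.
case: (lerP e em) => hle.
  exists e; split => // m'; rewrite inE => /orP[/eqP->|]; last exact: He.
  by case: Hm => h1 h2; apply: (shrink _ em) => //.
exists em; split => // m'; rewrite inE => /orP[/eqP->|ms] //.
by case: (He m' ms) => h1 h2; apply: (shrink _ e) => //; apply: ltW.
Qed.

Section Del.
Variables (Z P : {set I}) (n : I).
Hypothesis nP : n \notin P.

Local Notation Q := (regs Z (n |: P)).
Local Notation Qt := (Q :&: [set s : {ffun I -> bool} | s n]).
Local Notation Qf := (Q :\: [set s : {ffun I -> bool} | s n]).
Local Notation hQf := ([set setn s n true | s in Qf]).

Lemma cardQ : cnt Z (n |: P) = (#|Qt :|: hQf| + #|Qt :&: hQf|)%N.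
Proof.
rewrite cardsUI card_in_imset; first by rewrite cardsID.
move=> s s'; rewrite !inE => /andP[ns _] /andP[ns' _] E.
apply/ffunP => m; have := congr1 (fun g : {ffun I -> bool} => g m) E.
rewrite !ffunE; case: eqP => [->|] //= _.
by rewrite (negbTE ns) (negbTE ns').
Qed.

Lemma mk_t (s : {ffun I -> bool}) (xp : pt) : (forall m, m \notin P -> s m) -> CZ Z xp -> 0 < f n xp ->
  (forall m, m \in P -> 0 < sgnb (s m) * f m xp) -> s \in Qt.
Proof.
move=> H Cx fp G; have sn : s n by apply: H.
rewrite in_setI; apply/andP; split; last by rewrite inE.
apply/regsP; split.
  by move=> m; rewrite in_setU1 negb_or => /andP[_]; apply: H.
exists xp; split => // m; rewrite in_setU1 => /orP[/eqP->|]; last exact: G.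
by rewrite sn sgnb_true.
Qed.

Lemma mk_f (s : {ffun I -> bool}) (xn : pt) : (forall m, m \notin P -> s m) -> CZ Z xn -> f n xn < 0 ->
  (forall m, m \in P -> 0 < sgnb (s m) * f m xn) -> s \in hQf.
Proof.
move=> H Cx fn G; have sn : s n by apply: H.
apply/imsetP; exists (setn s n false).
  rewrite in_setD; apply/andP; split; first by rewrite inE ffunE eqxx.
  apply/regsP; split.
    move=> m; rewrite in_setU1 negb_or => /andP[mn mP].
    by rewrite ffunE (negbTE mn); apply: H.
  exists xn; split => // m; rewrite in_setU1 ffunE => /orP[/eqP->|mP].
    by rewrite eqxx sgnb_false oppr_gt0.
  have -> : (m == n) = false by apply/eqP => E; move: nP; rewrite -E mP.
  exact: G.
apply/ffunP => m; rewrite !ffunE; case: eqP => [->|] //.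
Qed.

Lemma Qt_sub : Qt \subset regs Z P.
Proof.
apply/subsetP => s; rewrite inE => /andP[/regsP[H [x [Cx G]]] sn].
rewrite inE in sn; apply/regsP; split.
  move=> m mP; case: (m =P n) => [->|/eqP mn] //; apply: H.
  by rewrite in_setU1 negb_or mn.
by exists x; split => // m mP; apply: G; rewrite in_setU1 mP orbT.
Qed.

Lemma hQf_sub : hQf \subset regs Z P.
Proof.
apply/subsetP => s' /imsetP[s]; rewrite inE => /andP[_ /regsP[H [x [Cx G]]]] ->.
apply/regsP; split.
  move=> m mP; rewrite ffunE; case: eqP => // /eqP mn; apply: H.
  by rewrite in_setU1 negb_or mn.
exists x; split => // m mP; rewrite ffunE.
have -> : (m == n) = false by apply/eqP => E; move: nP; rewrite -E mP.
by apply: G; rewrite in_setU1 mP orbT.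
Qed.

Lemma inter_sub : Qt :&: hQf \subset regs (n |: Z) P.
Proof.
apply/subsetP => s; rewrite inE => /andP[st sh].
move: (subsetP Qt_sub s st) => /regsP[H _].
move: st; rewrite inE => /andP[/regsP[_ [x [Cx Gx]]] sn]; rewrite inE in sn.
move: sh => /imsetP[s'] ; rewrite inE => /andP[s'n /regsP[_ [y [Cy Gy]]]] E.
rewrite inE in s'n.
have agree : forall m, m \in P -> s' m = s m.
  move=> m mP; rewrite E ffunE.
  by have -> : (m == n) = false by apply/eqP => E'; move: nP; rewrite -E' mP.
have fx : 0 < f n x by have := Gx n; rewrite in_setU1 eqxx sn sgnb_true; apply.
have fy : 0 < - f n y.
  by have := Gy n; rewrite in_setU1 eqxx (negbTE s'n) sgnb_false; apply.
set a := f n x; set c := - f n y.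
have ac : 0 < a + c by rewrite addr_gt0.
pose t := a / (a + c).
pose z := fun i => x i + t * (y i - x i).
have fz : forall m, f m z = f m x + t * (f m y - f m x).
  by move=> m; rewrite /z preact_line Lf_sub.
apply/regsP; split => //; exists z; split.
  apply/CZU1; split.
    rewrite fz /t -/a; have -> : f n y = - c by rewrite /c opprK.
    by field; apply/eqP => E0; move: ac; rewrite E0 ltxx.
  move=> m mZ; rewrite fz (Cx m mZ) (Cy m mZ); ring.
move=> m mP.
have g1 : 0 < sgnb (s m) * f m x by apply: Gx; rewrite in_setU1 mP orbT. have : 0 < sgnb (s' m) * f m y by apply: Gy; rewrite in_setU1 mP orbT.
rewrite agree // => g2.
have key : sgnb (s m) * f m z * (a + c) = c * (sgnb (s m) * f m x) + a * (sgnb (s m) * f m y).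
  rewrite fz /t; field; apply/eqP => E0; move: ac; rewrite E0 ltxx //.
by rewrite -(pmulr_lgt0 _ ac) key; apply: addr_gt0; apply: mulr_gt0.
Qed.
Lemma A_split (s : {ffun I -> bool}) : s \in regs Z P -> s \in Qt :|: hQf \/ s \in regs (n |: Z) P.
Proof.
move=> /regsP[H [x [Cx G]]].
case: (ltrgtP (f n x) 0) => h.
- by left; rewrite in_setU; apply/orP; right; apply: (mk_f H Cx h G).
- by left; rewrite in_setU; apply/orP; left; apply: (mk_t H Cx h G).
- by right; apply/regsP; split => //; exists x; split => //; apply/CZU1.
Qed.

Lemma B_sub : ncst n Z -> regs (n |: Z) P \subset Qt :&: hQf.
Proof.
move=> [x [y [Cx [Cy D]]]]; apply/subsetP => s /regsP[H [z [/CZU1[fz0 CzZ] G]]].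
pose u i := y i - x i.
have [e [e0 He]] := @small (enum P) (fun m => sgnb (s m) * f m z) (fun m => sgnb (s m) * Lf m u)
   (fun m mP => G m (etrans (esym (mem_enum _ _)) mP)).
pose z1 := fun i => z i + e * u i.
pose z2 := fun i => z i + (- e) * u i.
have f1 : forall m, f m z1 = f m z + e * (f m y - f m x) by move=> m; rewrite preact_line Lf_sub.
have f2 : forall m, f m z2 = f m z - e * (f m y - f m x).
  by move=> m; rewrite preact_line Lf_sub mulNr.
have C1 : CZ Z z1 by move=> m mZ; rewrite f1 CzZ // Cx // Cy // subrr mulr0 addr0.
have C2 : CZ Z z2 by move=> m mZ; rewrite f2 CzZ // Cx // Cy // subrr mulr0 subrr.
have G1 : forall m, m \in P -> 0 < sgnb (s m) * f m z1.
  move=> m mP; have [_ h] := He m (etrans (mem_enum _ _) mP).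
  rewrite f1 -Lf_sub -/u; lra.
have G2 : forall m, m \in P -> 0 < sgnb (s m) * f m z2.
  move=> m mP; have [h _] := He m (etrans (mem_enum _ _) mP).
  rewrite f2 -Lf_sub -/u; lra.
rewrite in_setI; apply/andP.
case: (ltrgtP (f n y - f n x) 0) => hD.
- split; [apply: (mk_t H C2 _ G2) | apply: (mk_f H C1 _ G1)]; rewrite ?f1 ?f2 fz0; nra.
- split; [apply: (mk_t H C1 _ G1) | apply: (mk_f H C2 _ G2)]; rewrite ?f1 ?f2 fz0; nra.
- by exfalso; apply: D; apply/eqP; rewrite eq_sym -subr_eq0 hD.
Qed.

Lemma del_le : (cnt Z (n |: P) <= cnt Z P + cnt (n |: Z) P)%N.
Proof.
rewrite cardQ; apply: leq_add; apply: subset_leq_card; last exact: inter_sub.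
by rewrite subUset Qt_sub hQf_sub.
Qed.

Lemma del_ge : ncst n Z -> (cnt Z P + cnt (n |: Z) P <= cnt Z (n |: P))%N.
Proof.
move=> hn; rewrite cardQ; apply: leq_add; apply: subset_leq_card; last exact: B_sub.
apply/subsetP => s sA; case: (A_split sA) => // sB.
by move: (subsetP (B_sub hn) s sB); rewrite in_setI in_setU => /andP[->].
Qed.

Lemma const_ge : (forall x, CZ Z x -> f n x <> 0) -> (cnt Z P <= cnt Z (n |: P))%N.
Proof.
move=> hn; rewrite cardQ; apply: leq_trans (leq_addr _ _); apply: subset_leq_card.
apply/subsetP => s sA; case: (A_split sA) => // /regsP[_ [z [/CZU1[fz0 Cz] _]]].
by exfalso; apply: (hn z).
Qed.

Lemma const_le : cst n Z -> (cnt Z (n |: P) <= cnt Z P)%N.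
Proof.
move=> hc; case: (classic (exists z, CZ Z z /\ f n z = 0)) => [[z [Cz fz]]|nz].
  suff -> : cnt Z (n |: P) = 0%N by [].
  apply: cnt_eq0 => s /regsP[_ [x [Cx G]]].
  by move: (G n (setU11 _ _)); rewrite (hc x z Cx Cz) fz mulr0 ltxx.
have e0 : cnt (n |: Z) P = 0%N.
  by apply: cnt_eq0 => s /regsP[_ [x [/CZU1[fx Cx] _]]]; apply: nz; exists x.
by have := del_le; rewrite e0 addn0.
Qed.
End Del.

Lemma not_ncst (n : I) (Z : {set I}) : ~ ncst n Z -> cst n Z.
Proof.
move=> H x y Cx Cy; case: (classic (f n x = f n y)) => // E.
by exfalso; apply: H; exists x, y.
Qed.

Lemma CZ1 (q : I) (x : pt) : CZ [set q] x <-> f q x = 0.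
Proof.
by split => [H|H m]; [apply: H; rewrite in_set1 | rewrite in_set1 => /eqP->].
Qed.

Lemma base_le (Z P : {set I}) : (forall m, m \in P -> cst m Z) -> (cnt Z P <= 1)%N.
Proof.
move=> hc; apply/card_le1_eqP => s s' /regsP[H [x [Cx G]]] /regsP[H' [x' [Cx' G']]].
apply/ffunP => m; case: (boolP (m \in P)) => mP; last by rewrite H ?H'.
have := G m mP; have := G' m mP; rewrite (hc m mP x' x Cx' Cx).
by case: (s m); case: (s' m); rewrite ?sgnb_true ?sgnb_false // => h1 h2; exfalso; lra.
Qed.

Lemma base_ge (Z P : {set I}) x : CZ Z x -> (forall m, m \in P -> f m x <> 0) -> (1 <= cnt Z P)%N.
Proof.
move=> Cx nz; rewrite card_gt0; apply/set0Pn.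
exists [ffun m => if m \in P then 0 < f m x else true]; apply/regsP; split.
  by move=> m mP; rewrite ffunE (negbTE mP).
exists x; split => // m mP; rewrite ffunE mP.
case: (ltrgtP (f m x) 0) => h; rewrite ?sgnb_true ?sgnb_false; try lra.
by exfalso; apply: (nz m mP).
Qed.

Definition LineP (Z P : {set I}) :=
  forall q, q \in P -> ncst q Z -> forall m, m \in P -> cst m (q |: Z).

Lemma line_le k : forall (Z P : {set I}), #|P| = k -> LineP Z P -> (cnt Z P <= 1 + #|P|)%N.
Proof.
elim: k => [|k IH] Z P hk hL.
  move/eqP: hk; rewrite cards_eq0 => /eqP ->; apply: leq_trans (base_le _) _ => //.
  by move=> m; rewrite in_set0.
have : P != set0 by rewrite -card_gt0 hk.
case/set0Pn => q qP.
have hP' : #|P :\ q| = k by move: hk; rewrite (cardsD1 q) qP add1n => -[].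
have qP' : q \notin P :\ q by rewrite !inE eqxx.
have hL' : LineP Z (P :\ q).
  by move=> q' q'P nc m mP; apply: hL => //; [move: q'P | move: mP] => /setD1P[].
have IH' := IH Z (P :\ q) hP' hL'.
rewrite -(setD1K qP) (cardsU1 q) qP' add1n.
case: (classic (ncst q Z)) => hn.
  apply: leq_trans (@del_le Z (P :\ q) q qP') _.
  have Hb : (cnt (q |: Z) (P :\ q) <= 1)%N.
    by apply: base_le => m /setD1P[_ mP]; exact: hL.
  move: IH' Hb; set a := cnt _ _; set c := cnt _ _; lia.
apply: leq_trans (@const_le Z (P :\ q) q qP' (not_ncst hn)) _.
by apply: leq_trans IH' _.
Qed.

Definition Span (Z : {set I}) (p u v r : pt) :=
  forall x, CZ Z x -> exists s t o, forall i, x i = p i + s * u i + t * v i + o * r i.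
Definition zero : pt := fun _ => 0.

Lemma Lf_zero n : Lf n zero = 0.
Proof. by rewrite /Lf preactE /zero !mulr0 !add0r subrr. Qed.

Lemma Span_ext Z p u v r p' u' v' r' :
  (forall i, p i = p' i) -> (forall i, u i = u' i) -> (forall i, v i = v' i) -> (forall i, r i = r' i) ->
  Span Z p u v r -> Span Z p' u' v' r'.
Proof.
move=> e1 e2 e3 e4 H x Cx; have [s [t [o E]]] := H x Cx.
by exists s, t, o => i; rewrite E e1 e2 e3 e4.
Qed.

Lemma Span_swap12 Z p u v r : Span Z p u v r -> Span Z p v u r.
Proof.
move=> H x Cx; have [s [t [o E]]] := H x Cx.
by exists t, s, o => i; rewrite E; ring.
Qed.
Lemma Span_swap23 Z p u v r : Span Z p u v r -> Span Z p u r v.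
Proof.
move=> H x Cx; have [s [t [o E]]] := H x Cx.
by exists s, o, t => i; rewrite E; ring.
Qed.
Lemma Span_swap13 Z p u v r : Span Z p u v r -> Span Z p r v u.
Proof.
move=> H x Cx; have [s [t [o E]]] := H x Cx.
by exists o, t, s => i; rewrite E; ring.
Qed.

Lemma Span_elim Z p u v r q : Span Z p u v r -> Lf q r != 0 ->
  Span (q |: Z) (fun i => p i - (f q p / Lf q r) * r i)
    (fun i => u i - (Lf q u / Lf q r) * r i) (fun i => v i - (Lf q v / Lf q r) * r i) zero.
Proof.
move=> H nz x /CZU1[fx Cx]; have [s [t [o E]]] := H x Cx.
have := preact_aff q E; rewrite fx => E2.
have ho : o = - (f q p + s * Lf q u + t * Lf q v) / Lf q r.
  by apply: (mulIf nz); rewrite divfK //; lra.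
exists s, t, 0 => i; rewrite E ho /zero; field; exact: nz.
Qed.

Lemma Span_cst Z p u v r q : Span Z p u v r -> Lf q u = 0 -> Lf q v = 0 -> Lf q r = 0 -> cst q Z.
Proof.
move=> H h1 h2 h3 x y Cx Cy.
have [s [t [o E]]] := H x Cx; have [s' [t' [o' E']]] := H y Cy.
by rewrite (preact_aff q E) (preact_aff q E') h1 h2 h3 !mulr0 !addr0.
Qed.

Lemma cut3 Z p u v r q : Span Z p u v r -> ncst q Z -> exists p' u' v', Span (q |: Z) p' u' v' zero.
Proof.
move=> H hn; case: (boolP (Lf q r != 0)) => hr; first by eexists _, _, _; apply: Span_elim H hr.
case: (boolP (Lf q v != 0)) => hv; first by eexists _, _, _; apply: Span_elim (Span_swap23 H) hv.
case: (boolP (Lf q u != 0)) => hu; first by eexists _, _, _; apply: Span_elim (Span_swap13 H) hu.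
exfalso; move: hr hv hu; rewrite !negbK => /eqP hr /eqP hv /eqP hu.
case: hn => x [y [Cx [Cy D]]]; apply: D; exact: (Span_cst H hu hv hr).
Qed.

Lemma cut2 Z p u v q : Span Z p u v zero -> ncst q Z -> exists p' u', Span (q |: Z) p' u' zero zero.
Proof.
move=> H hn; case: (boolP (Lf q v != 0)) => hv.
  have := Span_elim (Span_swap23 H) hv => H2; eexists _, _.
  by apply: Span_ext H2 => // i; rewrite /zero Lf_zero mul0r mul0r subrr.
case: (boolP (Lf q u != 0)) => hu.
  have := Span_elim (Span_swap12 (Span_swap13 H)) hu => H2; eexists _, _.
  by apply: Span_ext H2 => // i; rewrite /zero Lf_zero mul0r mul0r subrr.
exfalso; move: hv hu; rewrite !negbK => /eqP hv /eqP hu.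
case: hn => x [y [Cx [Cy D]]]; apply: D; exact: (Span_cst H hu hv (Lf_zero q)).
Qed.

Lemma cut1 Z p u q : Span Z p u zero zero -> ncst q Z -> exists p', Span (q |: Z) p' zero zero zero.
Proof.
move=> H hn; case: (boolP (Lf q u != 0)) => hu.
  have := Span_elim (Span_swap13 H) hu => H2; eexists _.
  by apply: Span_ext H2 => // i; rewrite /zero Lf_zero mul0r mul0r subrr.
exfalso; move: hu; rewrite !negbK => /eqP hu.
case: hn => x [y [Cx [Cy D]]]; apply: D; exact: (Span_cst H hu (Lf_zero q) (Lf_zero q)).
Qed.

Lemma Span0_cst Z p m : Span Z p zero zero zero -> cst m Z.
Proof. by move=> H; apply: (Span_cst H); rewrite Lf_zero. Qed.

Definition e_ (j : nat) : pt := fun i => if (i : nat) == j then 1 else 0.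

Lemma Span_top : Span set0 zero (e_ 0) (e_ 1) (e_ 2).
Proof.
move=> x _; exists (x (inord 0)), (x (inord 1)), (x (inord 2)).
case=> [[|[|[|k]]] Hi] //=; rewrite /e_ /zero /=; rewrite ?mulr1 ?mulr0 ?addr0 ?add0r;
  by congr x; apply: val_inj; rewrite /= inordK.
Qed.

End Gen.

Lemma two_by_two (a c a' c' : R) : (a != 0) || (c != 0) ->
  (forall x y, a * x + c * y = 0 -> a' * x + c' * y = 0) \/
  (forall x y, a * x + c * y = 0 -> a' * x + c' * y = 0 -> x = 0 /\ y = 0).
Proof.
move=> nz; case: (boolP (a * c' - a' * c == 0)) => [/eqP det|det].
  left => x y h.
  case/orP: nz => nz.
    apply: (mulfI nz); rewrite mulr0.
    have -> : a * (a' * x + c' * y) = a' * (a * x + c * y) + y * (a * c' - a' * c) by ring.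
    by rewrite h det !mulr0 addr0.
  apply: (mulfI nz); rewrite mulr0.
  have -> : c * (a' * x + c' * y) = c' * (a * x + c * y) - x * (a * c' - a' * c) by ring.
  by rewrite h det !mulr0 subr0.
right => x y h1 h2; split.
  apply: (mulIf det); rewrite mul0r.
  have -> : x * (a * c' - a' * c) = c' * (a * x + c * y) - c * (a' * x + c' * y) by ring.
  by rewrite h1 h2 !mulr0 subr0.
apply: (mulIf det); rewrite mul0r.
have -> : y * (a * c' - a' * c) = a * (a' * x + c' * y) - a' * (a * x + c * y) by ring.
by rewrite h1 h2 !mulr0 subr0.
Qed.

Section Up.
Variable d : nat.
Variable w : 'I_d -> 'I_2 -> R.
Variable b : 'I_d -> R.
Local Notation I := ('I_d * 'I_2)%type.
Local Notation pt := ('I_3 -> R).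
Local Notation f n x := (preact w b x n).
Local Notation cnt := (cnt w b).
Local Notation CZ := (CZ w b).
Local Notation ncst := (ncst w b).
Local Notation cst := (cst w b).
Local Notation LineP := (LineP w b).

Definition F (k : 'I_d) : I := (k, ord0).
Definition G (k : 'I_d) : I := (k, ord_max).

Lemma FE k x : f (F k) x = w k ord0 * x (inord 0) + w k ord_max * x (inord 1) + b k.
Proof. by rewrite preactE. Qed.
Lemma GE k x : f (G k) x = w k ord0 * x (inord 1) + w k ord_max * x (inord 2) + b k.
Proof. by rewrite preactE. Qed.

Lemma S_gen (io : 'I_d -> I) (phi psi : pt -> R) :
  (forall k x, f (io k) x = w k ord0 * phi x + w k ord_max * psi x + b k) ->
  forall i j, ncst (io i) set0 -> ncst (io j) [set io i] ->
  forall l, cst (io l) (io j |: [set io i]).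
Proof.
move=> hE i j [x [y [_ [_ D]]]] [x' [y' [/CZ1 hx [/CZ1 hy D']]]] l.
have nz : (w i ord0 != 0) || (w i ord_max != 0).
  apply: contra_notT D => /norP[/negPn/eqP a0 /negPn/eqP c0].
  by rewrite !hE a0 c0 !mul0r.
move: hx hy; rewrite !hE => hx hy.
case: (two_by_two (w j ord0) (w j ord_max) nz) => [L|Rr].
  exfalso; apply: D'; rewrite !hE.
  have := L (phi x' - phi y') (psi x' - psi y'); rewrite !mulrBr => h.
  have : w j ord0 * phi x' - w j ord0 * phi y' + (w j ord_max * psi x' - w j ord_max * psi y') = 0.
    by apply: h; lra.
  lra.
move=> x1 y1 /CZU1[hjx /CZ1 hix] /CZU1[hjy /CZ1 hiy].
move: hjx hix hjy hiy; rewrite !hE => hjx hix hjy hiy.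
have [e0 e1] : phi x1 - phi y1 = 0 /\ psi x1 - psi y1 = 0.
  by apply: Rr; rewrite !mulrBr; lra.
move/eqP: e0; rewrite subr_eq0 => /eqP e0; move/eqP: e1; rewrite subr_eq0 => /eqP e1.
by rewrite e0 e1.
Qed.


Lemma line2 n1 n2 : ncst n1 set0 -> ncst n2 [set n1] -> forall P, LineP (n2 |: [set n1]) P.
Proof.
move=> h1 h2 P q _ hq m _.
have [p [u [v H2]]] := cut3 (@Span_top _ w b) h1; rewrite setU0 in H2.
have [p' [u' H1]] := cut2 H2 h2.
have [p'' H0] := cut1 H1 hq.
exact: Span0_cst H0.
Qed.

Definition Fs (i : nat) : {set I} := [set n : I | (n.2 == ord0) && (n.1 < i)%N].
Definition Gs (i : nat) : {set I} := [set n : I | (n.2 == ord_max) && (n.1 < i)%N].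
Local Notation FA := (Fs d).

Lemma inFs n i : n \in Fs i -> n = F n.1.
Proof. by case: n => a j; rewrite inE /= => /andP[/eqP -> _]. Qed.
Lemma inGs n i : n \in Gs i -> n = G n.1.
Proof. by case: n => a j; rewrite inE /= => /andP[/eqP -> _]. Qed.

Lemma Fs0 : Fs 0 = set0.
Proof. by apply/setP => n; rewrite !inE ltn0 andbF. Qed.
Lemma Gs0 : Gs 0 = set0.
Proof. by apply/setP => n; rewrite !inE ltn0 andbF. Qed.

Lemma FsS (k : 'I_d) : Fs k.+1 = F k |: Fs k.
Proof.
apply/setP => -[a j]; rewrite !inE /= xpair_eqE ltnS leq_eqVlt.
by case: (j == ord0); rewrite ?andbT ?andbF //= -val_eqE.
Qed.
Lemma GsS (k : 'I_d) : FA :|: Gs k.+1 = G k |: (FA :|: Gs k).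
Proof.
apply/setP => -[a j]; rewrite !inE /= xpair_eqE [(a < k.+1)%N]ltnS [(a <= k)%N]leq_eqVlt.
by case: (j == ord0); case: (j == ord_max); rewrite /= ?andbF ?andbT ?orbF ?orbT //= ltn_ord orbT.
Qed.
Lemma F_notin (k : 'I_d) : F k \notin Fs k.
Proof. by rewrite inE /= ltnn ?andbF. Qed.
Lemma G_notin (k : 'I_d) : G k \notin FA :|: Gs k.
Proof. by rewrite !inE /= ltnn ?andbF ?orbF. Qed.
Lemma F_notin_G (k : 'I_d) : F k \notin Fs k.
Proof. exact: F_notin. Qed.
Lemma Fs_all : FA :|: Gs d = setT.
Proof.
apply/setP => -[a j]; rewrite !inE /= ltn_ord !andbT.
by case: j => [[|[|?]] ?].
Qed.
Lemma card_Fs i : (i <= d)%N -> #|Fs i| = i.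
Proof.
elim: i => [|i IH] hi; first by rewrite Fs0 cards0.
by have := FsS (Ordinal hi); rewrite /= => ->; rewrite cardsU1 F_notin IH // ltnW.
Qed.

Lemma binS2 n : 'C(n.+1, 2) = ('C(n, 2) + n)%N.
Proof. by rewrite binS bin1. Qed.

Lemma U_F (i : 'I_d) : ncst (F i) set0 -> (cnt [set F i] (Fs i) <= 1 + i)%N.
Proof.
move=> hi; rewrite -{2}(card_Fs (ltnW (ltn_ord i))).
apply: (@line_le _ w b _ _ _ erefl) => q qP hq m mP.
rewrite (inFs qP) (inFs mP); rewrite (inFs qP) in hq.
by apply: (S_gen (io := F) (phi := fun x => x (inord 0)) (psi := fun x => x (inord 1))) => // k x; rewrite FE.
Qed.

Lemma U_topF i : (i <= d)%N -> (cnt set0 (Fs i) <= 1 + i + 'C(i, 2))%N.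
Proof.
elim: i => [|i IH] hi.
  by rewrite Fs0; apply: leq_trans (base_le _) _ => // m; rewrite in_set0.
have := FsS (Ordinal hi); rewrite /= => ->.
have IH' := IH (ltnW hi); rewrite binS2.
case: (classic (ncst (F (Ordinal hi)) set0)) => hn.
  apply: leq_trans (@del_le _ w b set0 _ _ (F_notin (Ordinal hi))) _.
  rewrite setU0; have := U_F hn; rewrite /= => h2.
  move: IH' h2; set a := cnt _ _; set c := cnt _ _; lia.
apply: leq_trans (@const_le _ w b set0 _ _ (F_notin (Ordinal hi)) (not_ncst hn)) _.
move: IH'; set a := cnt _ _; lia.
Qed.

Lemma U_G1 (k : 'I_d) : ncst (G k) set0 -> forall i, (i <= d)%N ->
  (cnt [set G k] (Fs i) <= 1 + i + 'C(i, 2))%N.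
Proof.
move=> hk; elim=> [|i IH] hi.
  by rewrite Fs0; apply: leq_trans (base_le _) _ => // m; rewrite in_set0.
have := FsS (Ordinal hi); rewrite /= => ->.
have IH' := IH (ltnW hi); rewrite binS2.
case: (classic (ncst (F (Ordinal hi)) [set G k])) => hn.
  apply: leq_trans (@del_le _ w b _ _ _ (F_notin (Ordinal hi))) _.
  have h2 := @line_le _ w b _ _ (Fs i) erefl (line2 (P := Fs i) hk hn).
  rewrite card_Fs ?(ltnW hi) // in h2.
  move: IH' h2; set a := cnt _ _; set c := cnt _ _; lia.
apply: leq_trans (@const_le _ w b _ _ _ (F_notin (Ordinal hi)) (not_ncst hn)) _.
move: IH'; set a := cnt _ _; lia.
Qed.

Lemma drop_G Z j : (j <= d)%N -> (forall l : 'I_d, (l < j)%N -> cst (G l) Z) ->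
  (cnt Z (FA :|: Gs j) <= cnt Z FA)%N.
Proof.
elim: j => [|j IH] hj hc; first by rewrite Gs0 setU0.
rewrite (GsS (Ordinal hj)).
apply: leq_trans (@const_le _ w b _ _ _ (G_notin (Ordinal hj)) (hc _ _)) _ => //.
by apply: IH (ltnW hj) _ => l hl; apply: hc; apply: ltn_trans hl _.
Qed.

Lemma U_G2 (k : 'I_d) : ncst (G k) set0 -> forall j, (j <= d)%N ->
  (cnt [set G k] (FA :|: Gs j) <= 1 + d + 'C(d, 2) + j * (1 + d))%N.
Proof.
move=> hk; elim=> [|j IH] hj.
  by rewrite Gs0 setU0 mul0n addn0; apply: U_G1.
rewrite (GsS (Ordinal hj)).
have IH' := IH (ltnW hj).
case: (classic (ncst (G (Ordinal hj)) [set G k])) => hn.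
  apply: leq_trans (@del_le _ w b _ _ _ (G_notin (Ordinal hj))) _.
  have h2 : (cnt (G (Ordinal hj) |: [set G k]) (FA :|: Gs j) <= 1 + d)%N.
    apply: leq_trans (drop_G (ltnW hj) _) _.
      by move=> l _; apply: (S_gen (io := G) (phi := fun x => x (inord 1)) (psi := fun x => x (inord 2))) => // k' x; rewrite GE.
    have h3 := @line_le _ w b _ _ FA erefl (line2 (P := FA) hk hn).
    by rewrite card_Fs // in h3.
  move: IH' h2; set a := cnt _ _; set c := cnt _ _; lia.
apply: leq_trans (@const_le _ w b _ _ _ (G_notin (Ordinal hj)) (not_ncst hn)) _.
move: IH'; set a := cnt _ _; lia.
Qed.

Lemma U_top k : (k <= d)%N ->
  (cnt set0 (FA :|: Gs k) <= k.+1 * (1 + d + 'C(d, 2)) + (1 + d) * 'C(k, 2))%N.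
Proof.
elim: k => [|k IH] hk.
  by rewrite Gs0 setU0 mul1n muln0 addn0; apply: U_topF.
rewrite (GsS (Ordinal hk)) binS2.
have IH' := IH (ltnW hk).
case: (classic (ncst (G (Ordinal hk)) set0)) => hn.
  apply: leq_trans (@del_le _ w b _ _ _ (G_notin (Ordinal hk))) _.
  rewrite setU0; have h2 := U_G2 hn (ltnW hk); rewrite /= in h2.
  move: IH' h2; set a := cnt _ _; set c := cnt _ _; set C := 'C(d, 2); set C' := 'C(k, 2); nia.
apply: leq_trans (@const_le _ w b _ _ _ (G_notin (Ordinal hk)) (not_ncst hn)) _.
move: IH'; set a := cnt _ _; set C := 'C(d, 2); set C' := 'C(k, 2); nia.
Qed.

End Up.

Lemma bin2_double n : ('C(n, 2) * 2 = n * n.-1)%N.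
Proof.
elim: n => [|n IH] //; rewrite binS2 mulnDl IH; case: n {IH} => //= n; lia.
Qed.

Lemma num_cnt d (w : 'I_d -> 'I_2 -> R) b : num_regions w b = cnt w b set0 setT.
Proof.
apply: eq_card => s; apply/idP/idP.
  rewrite inE => /asboolP [x Hx]; apply/regsP; split => [n|]; first by rewrite in_setT.
  by exists x; split => [m|m _]; [rewrite in_set0 | apply: Hx].
move/regsP => [_ [x [_ G]]]; rewrite inE; apply/asboolP; exists x => n; apply: G; exact: in_setT.
Qed.

Lemma upper d (w : 'I_d -> 'I_2 -> R) b : (num_regions w b <= d ^ 3 + d ^ 2 + d + 1)%N.
Proof.
rewrite num_cnt -(Fs_all d); apply: leq_trans (U_top w b (leqnn d)) _.
have := bin2_double d; move: ('C(d, 2)) => C hC.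
suff : (d.+1 * (1 + d + C) + (1 + d) * C = d ^ 3 + d ^ 2 + d + 1)%N by move=> ->.
move: hC; clear; case: d => [|n] /= hC; first by lia.
nia.
Qed.

Section Low.
Variable d : nat.
Local Notation I := ('I_d * 'I_2)%type.
Local Notation pt := ('I_3 -> R).
Definition M (k : 'I_d) : R := (k.+1)%:R.
Definition w0 (k : 'I_d) (j : 'I_2) : R := if j == ord0 then 1 else M k.
Definition b0 (k : 'I_d) : R := M k ^+ 2.
Local Notation f n x := (preact w0 b0 x n).
Local Notation cnt := (cnt w0 b0).
Local Notation CZ := (CZ w0 b0).
Local Notation ncst := (ncst w0 b0).
Local Notation Fs := (Fs d).
Local Notation Gs := (Gs d).
Local Notation FA := (Fs d).

Lemma inFs_lt (n : I) i : n \in Fs i -> (n.1 < i)%N.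
Proof. by rewrite inE => /andP[]. Qed.

Definition RR := R.
Definition mkpt (a0 a1 a2 : RR) : pt :=
  fun i => if (i : nat) == 0%N then a0 else if (i : nat) == 1%N then a1 else a2.

Lemma FEp k (a0 a1 a2 : RR) : f (F k) (mkpt a0 a1 a2) = a0 + M k * a1 + M k ^+ 2.
Proof. by rewrite FE /mkpt !inordK //= /w0 /b0 /= mul1r. Qed.
Lemma GEp k (a0 a1 a2 : RR) : f (G k) (mkpt a0 a1 a2) = a1 + M k * a2 + M k ^+ 2.
Proof. by rewrite GE /mkpt !inordK //= /w0 /b0 /= mul1r. Qed.

Lemma Mpos k : 0 < M k. Proof. exact: ltr0Sn. Qed.
Lemma Mne0 k : M k != 0. Proof. by rewrite gt_eqF // Mpos. Qed.
Lemma Mneq (k l : 'I_d) : (k : nat) != l -> M k - M l != 0.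
Proof. by rewrite subr_eq0 /M eqr_nat eqSS. Qed.

Lemma ncst_pts n Z (a b c a' b' c' : RR) : CZ Z (mkpt a b c) -> CZ Z (mkpt a' b' c') ->
  f n (mkpt a b c) <> f n (mkpt a' b' c') -> ncst n Z.
Proof. by move=> h1 h2 h3; exists (mkpt a b c), (mkpt a' b' c'). Qed.

Lemma CZ0 x : CZ set0 x. Proof. by move=> m; rewrite in_set0. Qed.

Lemma neq_of_sub (x y : R) : x - y != 0 -> x <> y.
Proof. by move=> h E; move: h; rewrite E subrr eqxx. Qed.

Lemma L_F (i : 'I_d) j : (j <= i)%N -> (1 + j <= cnt [set F i] (Fs j))%N.
Proof.
elim: j => [|j IH] hj.
  rewrite Fs0; apply: (@base_ge _ _ _ _ _ (mkpt (- M i ^+ 2) 0 0)).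
    by apply/CZ1; rewrite FEp; ring.
  by move=> m; rewrite in_set0.
have hl : (j < d)%N by apply: leq_trans hj (ltnW (ltn_ord i)).
have := FsS (Ordinal hl); rewrite /= => ->.
have hne : (j != i :> nat) by rewrite neq_ltn hj.
have nc : ncst (F (Ordinal hl)) [set F i].
  apply: (@ncst_pts _ _ (- M i * 0 - M i ^+ 2) 0 0 (- M i * 1 - M i ^+ 2) 1 0);
    rewrite ?CZ1 ?FEp; try ring.
  apply: neq_of_sub; rewrite [X in X != 0](_ : _ = M i - M (Ordinal hl)); last by ring.
  by apply: Mneq; rewrite eq_sym.
apply: leq_trans (@del_ge _ _ _ _ _ _ (F_notin (Ordinal hl)) nc).
apply: (@leq_trans (1 + j + 1)%N); first by rewrite addn1.
apply: leq_add; first by apply: IH; apply: ltnW.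
apply: (@base_ge _ _ _ _ _ (mkpt (M i * M (Ordinal hl)) (- (M i + M (Ordinal hl))) 0)).
  by apply/CZU1; split; [|apply/CZ1]; rewrite FEp; ring.
move=> m mP; rewrite (inFs mP) FEp.
have lt := inFs_lt mP.
have -> : M i * M (Ordinal hl) + M m.1 * - (M i + M (Ordinal hl)) + M m.1 ^+ 2 =
   (M m.1 - M i) * (M m.1 - M (Ordinal hl)) by ring.
by apply/eqP; rewrite mulf_neq0 // Mneq //= ?neq_ltn ?lt //; rewrite (ltn_trans lt hj).
Qed.

Lemma GE0 m x : f (G m) x = x (inord 1) + M m * x (inord 2) + M m ^+ 2.
Proof. by rewrite GE /w0 /b0 /= mul1r. Qed.

Lemma L_topF i : (i <= d)%N -> (1 + i + 'C(i, 2) <= cnt set0 (Fs i))%N.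
Proof.
elim: i => [|i IH] hi.
  rewrite Fs0 addn0; apply: (@base_ge _ _ _ _ _ (mkpt 0 0 0)); first exact: CZ0.
  by move=> m; rewrite in_set0.
set l := Ordinal hi.
have := FsS l; rewrite /= => ->.
have nc : ncst (F l) set0.
  apply: (@ncst_pts _ _ 0 0 0 1 0 0); try exact: CZ0.
  apply: neq_of_sub; rewrite !FEp [X in X != 0](_ : _ = -1); last by ring.
  by rewrite oppr_eq0 oner_neq0.
apply: leq_trans (@del_ge _ _ _ _ _ _ (F_notin l) nc).
rewrite setU0 binS2.
apply: (@leq_trans ((1 + i + 'C(i, 2)) + (1 + i))%N); first by lia.
by apply: leq_add; [apply: IH; apply: ltnW | apply: L_F].
Qed.

Lemma L_line (k l : 'I_d) j : (j <= l)%N -> (1 + j <= cnt (F l |: [set G k]) (Fs j))%N.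
Proof.
have Rpt : forall t : RR, CZ (F l |: [set G k])
    (mkpt (- M l * t - M l ^+ 2) t (- (t + M k ^+ 2) / M k)).
  move=> t; apply/CZU1; split; [|apply/CZ1]; rewrite ?FEp ?GEp; first by ring.
  by field; rewrite ?nat1r; apply: Mne0.
elim: j => [|j IH] hj.
  rewrite Fs0; apply: (@base_ge _ _ _ _ _ _ (Rpt 0)).
  by move=> m; rewrite in_set0.
have hl : (j < d)%N by apply: leq_trans hj (ltnW (ltn_ord l)).
set jj := Ordinal hl.
have := FsS jj; rewrite /= => ->.
have nc : ncst (F jj) (F l |: [set G k]).
  apply: (ncst_pts (Rpt 0) (Rpt 1)).
  apply: neq_of_sub; rewrite !FEp [X in X != 0](_ : _ = M l - M jj); last by ring.
  by apply: Mneq; rewrite eq_sym neq_ltn hj.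
apply: leq_trans (@del_ge _ _ _ _ _ _ (F_notin jj) nc).
apply: (@leq_trans (1 + j + 1)%N); first by rewrite addn1.
apply: leq_add; first by apply: IH; apply: ltnW.
apply: (@base_ge _ _ _ _ _ (mkpt (M l * M jj) (- (M l + M jj)) ((M l + M jj - M k ^+ 2) / M k))).
  apply/CZU1; split; [|apply/CZU1; split; [|apply/CZ1]]; rewrite ?FEp ?GEp; try ring.
  by field; rewrite ?nat1r; apply: Mne0.
move=> m mP; rewrite (inFs mP) FEp.
have lt := inFs_lt mP.
have -> : M l * M jj + M m.1 * - (M l + M jj) + M m.1 ^+ 2 =
   (M m.1 - M l) * (M m.1 - M jj) by ring.
apply/eqP; rewrite mulf_neq0 // Mneq //= neq_ltn ?lt //.
by rewrite (ltn_trans lt hj).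
Qed.

Lemma L_G1 (k : 'I_d) i : (i <= d)%N -> (1 + i + 'C(i, 2) <= cnt [set G k] (Fs i))%N.
Proof.
elim: i => [|i IH] hi.
  rewrite Fs0 addn0; apply: (@base_ge _ _ _ _ _ (mkpt 0 (- M k ^+ 2) 0)).
    by apply/CZ1; rewrite GEp; ring.
  by move=> m; rewrite in_set0.
set l := Ordinal hi.
have := FsS l; rewrite /= => ->.
have nc : ncst (F l) [set G k].
  apply: (@ncst_pts _ _ 0 (- M k ^+ 2) 0 1 (- M k ^+ 2) 0); rewrite ?CZ1 ?GEp; try ring.
  apply: neq_of_sub; rewrite !FEp [X in X != 0](_ : _ = -1); last by ring.
  by rewrite oppr_eq0 oner_neq0.
apply: leq_trans (@del_ge _ _ _ _ _ _ (F_notin l) nc).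
rewrite binS2.
apply: (@leq_trans ((1 + i + 'C(i, 2)) + (1 + i))%N); first by lia.
by apply: leq_add; [apply: IH; apply: ltnW | apply: L_line].
Qed.

Lemma L_GG_line (j k : 'I_d) i : (i <= d)%N -> (1 + i <= cnt (G j |: [set G k]) (Fs i))%N.
Proof.
have Vpt : forall t : RR, CZ (G j |: [set G k]) (mkpt t (M j * M k) (- (M j + M k))).
  by move=> t; apply/CZU1; split; [|apply/CZ1]; rewrite GEp; ring.
elim: i => [|i IH] hi.
  rewrite Fs0; apply: (@base_ge _ _ _ _ _ _ (Vpt 0)).
  by move=> m; rewrite in_set0.
set ii := Ordinal hi.
have := FsS ii; rewrite /= => ->.
have nc : ncst (F ii) (G j |: [set G k]).
  apply: (ncst_pts (Vpt 0) (Vpt 1)).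
  apply: neq_of_sub; rewrite !FEp [X in X != 0](_ : _ = -1); last by ring.
  by rewrite oppr_eq0 oner_neq0.
apply: leq_trans (@del_ge _ _ _ _ _ _ (F_notin ii) nc).
apply: (@leq_trans (1 + i + 1)%N); first by rewrite addn1.
apply: leq_add; first by apply: IH; apply: ltnW.
apply: (@base_ge _ _ _ _ _ (mkpt (- (M ii * (M j * M k)) - M ii ^+ 2) (M j * M k) (- (M j + M k)))).
  apply/CZU1; split; [|apply/CZU1; split; [|apply/CZ1]]; rewrite ?FEp ?GEp; ring.
move=> m mP; rewrite (inFs mP) FEp.
have lt := inFs_lt mP.
have -> : - (M ii * (M j * M k)) - M ii ^+ 2 + M m.1 * (M j * M k) + M m.1 ^+ 2 =
   (M m.1 - M ii) * (M j * M k + M m.1 + M ii) by ring.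
apply/eqP; rewrite mulf_neq0 // ?Mneq //= ?neq_ltn ?lt //.
have := Mpos j; have := Mpos k; have := Mpos m.1; have := Mpos ii => *.
by rewrite gt_eqF //; apply: addr_gt0; [apply: addr_gt0 => //; apply: mulr_gt0|].
Qed.

Lemma lift_G Z j : (j <= d)%N ->
  (forall l : 'I_d, (l < j)%N -> forall x, CZ Z x -> f (G l) x <> 0) ->
  (cnt Z FA <= cnt Z (FA :|: Gs j))%N.
Proof.
elim: j => [|j IH] hj hc; first by rewrite Gs0 setU0.
rewrite (GsS (Ordinal hj)).
apply: leq_trans (@const_ge _ _ _ _ _ _ (G_notin (Ordinal hj)) (hc _ _)) => //.
by apply: IH (ltnW hj) _ => l hl; apply: hc; apply: ltn_trans hl _.
Qed.

Lemma GG_nonzero (j k l : 'I_d) : (j : nat) != k -> (l : nat) != j -> (l : nat) != k ->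
  forall x, CZ (G j |: [set G k]) x -> f (G l) x <> 0.
Proof.
move=> hjk hlj hlk x /CZU1[hj /CZ1 hk]; move: hj hk; rewrite !GE0.
move: (x (inord 1)) (x (inord 2)) => x1 x2 hj hk.
have e2 : x2 = - (M j + M k).
  apply: (mulfI (Mneq hjk)).
  have -> : (M j - M k) * x2 = (x1 + M j * x2 + M j ^+ 2) - (x1 + M k * x2 + M k ^+ 2) - (M j ^+ 2 - M k ^+ 2) by ring.
  by rewrite hj hk; ring.
have e1 : x1 = M j * M k by move: hk; rewrite e2 => hk; apply/eqP; rewrite -subr_eq0 -hk; apply/eqP; ring.
rewrite e1 e2.
have -> : M j * M k + M l * - (M j + M k) + M l ^+ 2 = (M l - M j) * (M l - M k) by ring.
by apply/eqP; rewrite mulf_neq0 // Mneq.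
Qed.

Definition Acst := (1 + d + 'C(d, 2))%N.

Lemma L_G2 (k : 'I_d) j : (j <= k)%N -> (Acst + j * (1 + d) <= cnt [set G k] (FA :|: Gs j))%N.
Proof.
elim: j => [|j IH] hj.
  by rewrite Gs0 setU0 mul0n addn0; apply: L_G1.
have hl : (j < d)%N by apply: leq_trans hj (ltnW (ltn_ord k)).
set jj := Ordinal hl.
rewrite (GsS jj).
have Tpt : forall t : RR, CZ [set G k] (mkpt 0 t (- (t + M k ^+ 2) / M k)).
  by move=> t; apply/CZ1; rewrite GEp; field; rewrite ?nat1r; apply: Mne0.
have nc : ncst (G jj) [set G k].
  apply: (ncst_pts (Tpt 0) (Tpt 1)).
  apply: neq_of_sub; rewrite !GEp [X in X != 0](_ : _ = (M jj - M k) / M k); last by field; rewrite ?nat1r; apply: Mne0.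
  by rewrite mulf_neq0 ?invr_eq0 ?Mne0 // Mneq // neq_ltn hj.
apply: leq_trans (@del_ge _ _ _ _ _ _ (G_notin jj) nc).
apply: (@leq_trans ((Acst + j * (1 + d)) + (1 + d))%N); first by rewrite mulSn; lia.
apply: leq_add; first by apply: IH; apply: ltnW.
apply: leq_trans (lift_G _ _); first by apply: L_GG_line.
  exact: ltnW.
move=> l hlj; apply: GG_nonzero; rewrite ?neq_ltn ?hj ?hlj //=.
by rewrite (ltn_trans hlj hj).
Qed.

Lemma L_top k : (k <= d)%N ->
  (k.+1 * Acst + (1 + d) * 'C(k, 2) <= cnt set0 (FA :|: Gs k))%N.
Proof.
elim: k => [|k IH] hk.
  by rewrite Gs0 setU0 mul1n muln0 addn0; apply: L_topF.
set kk := Ordinal hk.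
rewrite (GsS kk) binS2.
have nc : ncst (G kk) set0.
  apply: (@ncst_pts _ _ 0 0 0 0 1 0); try exact: CZ0.
  apply: neq_of_sub; rewrite !GEp [X in X != 0](_ : _ = -1); last by ring.
  by rewrite oppr_eq0 oner_neq0.
apply: leq_trans (@del_ge _ _ _ _ _ _ (G_notin kk) nc).
rewrite setU0.
apply: (@leq_trans ((k.+1 * Acst + (1 + d) * 'C(k, 2)) + (Acst + k * (1 + d)))%N).
  by rewrite mulSn; nia.
by apply: leq_add; [apply: IH; apply: ltnW | apply: L_G2].
Qed.

End Low.

Lemma lower d : (d ^ 3 + d ^ 2 + d + 1 <= num_regions (@w0 d) (@b0 d))%N.
Proof.
rewrite num_cnt -(Fs_all d); apply: leq_trans (L_top (leqnn d)).
rewrite /Acst.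
have := bin2_double d; move: ('C(d, 2)) => C hC.
suff : (d.+1 * (1 + d + C) + (1 + d) * C = d ^ 3 + d ^ 2 + d + 1)%N by move=> ->.
move: hC; clear; case: d => [|n] /= hC; first by lia.
nia.
Qed.

Theorem mainTheorem8 (d1 : nat) (hd1 : (1 <= d1)%N) :
  (forall (w : 'I_d1 -> 'I_2 -> R) (b : 'I_d1 -> R),
      (num_regions w b <= d1 ^ 3 + d1 ^ 2 + d1 + 1)%N) /\
  (exists (w : 'I_d1 -> 'I_2 -> R) (b : 'I_d1 -> R),
      num_regions w b = (d1 ^ 3 + d1 ^ 2 + d1 + 1)%N).
Proof.
split; first exact: upper.
exists (@w0 d1), (@b0 d1); apply/eqP; rewrite eqn_leq upper lower //.
Qed.
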